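(* Suppose $\gamma$ is a geodesic from $(x_1,y_1)$ to $(x_2,y_2)$ with $x_2\ge x_1$. Then there exists a semi-directed, non-self-intersecting geodesic $\gamma'$ from $(x_1,y_1)$ to $(x_2,y_2)$.
   Context: Model: Let $G$ be a probability measure on $[0,\infty)$. In $\mathbb Z^2$, every vertical edge receives weight $1$ and every horizontal edge (joining $(x,y)$ and $(x+1,y)$) receives a non-negative random weight with law $G$ (independently). A path is a sequence $(z_0,z_1,\dots)$ of points of $\mathbb Z^2$ with $z_k,z_{k+1}$ joined by an edge; its passage time $T(p)$ is the sum of weights over edges $(z_k,z_{k+1})$ of $p$; $T(u,w)=\inf_pT(p)$ over paths from $u$ to $w$, and a path from $u$ to $w$ attaining the infimum is a geodesic. A path is semi-directed if $z_{k+1}-z_k\in\{(1,0),(0,1),(0,-1)\}$ for all $k$; it is non-self-intersecting if it visits no point twice. *)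

(* Defs.v *)
From Stdlib Require Import Reals ZArith List.
Open Scope R_scope.

Definition point := (Z * Z)%type.

(* A weight configuration: [w (x,y)] is the weight of the horizontal edge
   joining (x,y) and (x+1,y).  Vertical edges have weight 1. *)
Definition hweights := point -> R.

Definition adjacent (z z' : point) : Prop :=
  (Z.abs (fst z - fst z') + Z.abs (snd z - snd z'))%Z = 1%Z.

(* weight of the edge {z, z'} (only meaningful when adjacent) *)
Definition edge_weight (w : hweights) (z z' : point) : R :=
  if Z.eq_dec (fst z) (fst z') then 1
  else if Z.eq_dec (fst z + 1) (fst z') then w z
  else w z'.

Fixpoint consecutive (P : point -> point -> Prop) (p : list point) : Prop :=
  match p with
  | z :: ((z' :: _) as rest) => P z z' /\ consecutive P rest
  | _ => True
  end.

Definition is_path (p : list point) : Prop := p <> nil /\ consecutive adjacent p.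

Definition path_from_to (p : list point) (u v : point) : Prop :=
  is_path p /\ hd_error p = Some u /\ last p u = v.

Fixpoint passage_time (w : hweights) (p : list point) : R :=
  match p with
  | z :: ((z' :: _) as rest) => edge_weight w z z' + passage_time w rest
  | _ => 0
  end.

Definition geodesic (w : hweights) (p : list point) (u v : point) : Prop :=
  path_from_to p u v /\
  forall q, path_from_to q u v -> passage_time w p <= passage_time w q.

Definition sd_step (z z' : point) : Prop :=
  (fst z' = fst z + 1 /\ snd z' = snd z)%Z \/
  (fst z' = fst z /\ snd z' = snd z + 1)%Z \/
  (fst z' = fst z /\ snd z' = snd z - 1)%Z.

Definition semi_directed (p : list point) : Prop := consecutive sd_step p.

Definition non_self_intersecting (p : list point) : Prop := NoDup p.

(* Main.v *)
Require Import Defs.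
From Stdlib Require Import Reals ZArith List Lia Lra ListDec Wf_nat.
Import ListNotations.
Open Scope R_scope.

Fixpoint hc (p : list point) : nat :=
  match p with
  | z :: ((z' :: _) as rest) =>
      ((if Z.eq_dec (fst z) (fst z') then 0 else 1) + hc rest)%nat
  | _ => 0%nat
  end.

Lemma consec_split (P : point -> point -> Prop) l1 z l2 :
  consecutive P (l1 ++ z :: l2) <-> consecutive P (l1 ++ [z]) /\ consecutive P (z :: l2).
Proof.
  induction l1 as [|a l1 IH]; simpl.
  - tauto.
  - destruct l1 as [|b l1]; simpl in *; tauto.
Qed.

Lemma pt_split w l1 z l2 :
  passage_time w (l1 ++ z :: l2) = passage_time w (l1 ++ [z]) + passage_time w (z :: l2).
Proof.
  induction l1 as [|a l1 IH]; simpl.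
  - ring.
  - destruct l1 as [|b l1]; simpl in *; rewrite IH; ring.
Qed.

Lemma hc_cons2 a b r : hc (a :: b :: r) = ((if Z.eq_dec (fst a) (fst b) then 0 else 1) + hc (b :: r))%nat.
Proof. reflexivity. Qed.

Lemma hc_split l1 z l2 : hc (l1 ++ z :: l2) = (hc (l1 ++ [z]) + hc (z :: l2))%nat.
Proof.
  induction l1 as [|a l1 IH].
  - reflexivity.
  - destruct l1 as [|b l1].
    + cbn [app]. rewrite !hc_cons2. simpl. lia.
    + cbn [app] in *. rewrite !hc_cons2, IH. lia.
Qed.

Lemma last_split (l : list point) z r d : last (l ++ z :: r) d = last (z :: r) d.
Proof.
  induction l as [|a l IH]; simpl; auto.
  rewrite IH. destruct l; simpl; auto.
Qed.

Lemma last_default (a : point) l d d' : last (a :: l) d = last (a :: l) d'.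
Proof.
  revert a; induction l as [|b l IH]; intros a; simpl; auto.
  apply (IH b).
Qed.

Lemma hd_split (l : list point) z r r' : hd_error (l ++ z :: r) = hd_error (l ++ z :: r').
Proof. destruct l; reflexivity. Qed.

Lemma consec_3 (P : point -> point -> Prop) L z1 M z2 R :
  consecutive P (L ++ z1 :: (M ++ z2 :: R)) <->
  consecutive P (L ++ [z1]) /\ consecutive P (z1 :: M ++ [z2]) /\ consecutive P (z2 :: R).
Proof.
  rewrite consec_split.
  change (z1 :: M ++ z2 :: R) with ((z1 :: M) ++ z2 :: R).
  rewrite (consec_split P (z1 :: M) z2 R). simpl. tauto.
Qed.

Lemma pt_3 w L z1 M z2 R :
  passage_time w (L ++ z1 :: (M ++ z2 :: R)) =
  passage_time w (L ++ [z1]) + passage_time w (z1 :: M ++ [z2]) + passage_time w (z2 :: R).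
Proof.
  rewrite pt_split.
  change (z1 :: M ++ z2 :: R) with ((z1 :: M) ++ z2 :: R).
  rewrite (pt_split w (z1 :: M) z2 R). simpl. ring.
Qed.

Lemma hc_3 L z1 M z2 R :
  hc (L ++ z1 :: (M ++ z2 :: R)) =
  (hc (L ++ [z1]) + hc (z1 :: M ++ [z2]) + hc (z2 :: R))%nat.
Proof.
  rewrite hc_split.
  change (z1 :: M ++ z2 :: R) with ((z1 :: M) ++ z2 :: R).
  rewrite (hc_split (z1 :: M) z2 R). simpl. lia.
Qed.

Lemma pt_nonneg w (Hw : forall z, 0 <= w z) p : 0 <= passage_time w p.
Proof.
  induction p as [|a p IH]; simpl; [lra|].
  destruct p as [|b p]; [lra|].
  assert (0 <= edge_weight w a b).
  { unfold edge_weight. destruct Z.eq_dec; [lra|]. destruct Z.eq_dec; auto. }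
  lra.
Qed.

Lemma LB w (Hw : forall z, 0 <= w z) S z :
  consecutive adjacent (z :: S) ->
  IZR (Z.abs (snd z - snd (last (z :: S) z))) <= passage_time w (z :: S).
Proof.
  revert z; induction S as [|z' S IH]; intros z H.
  - simpl. replace (snd z - snd z)%Z with 0%Z by lia. simpl. lra.
  - destruct H as [Hadj H].
    specialize (IH z' H).
    change (last (z :: z' :: S) z) with (last (z' :: S) z).
    rewrite (last_default z' S z z').
    change (passage_time w (z :: z' :: S)) with (edge_weight w z z' + passage_time w (z' :: S)).
    set (e := last (z' :: S) z') in *.
    assert (Hz : (Z.abs (snd z - snd e) <= Z.abs (snd z - snd z') + Z.abs (snd z' - snd e))%Z) by lia.
    apply IZR_le in Hz. rewrite plus_IZR in Hz.
    assert (IZR (Z.abs (snd z - snd z')) <= edge_weight w z z').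
    { unfold adjacent in Hadj. unfold edge_weight. destruct Z.eq_dec.
      - replace (Z.abs (snd z - snd z')) with 1%Z by lia. simpl; lra.
      - replace (Z.abs (snd z - snd z')) with 0%Z by lia.
        destruct Z.eq_dec; simpl; auto. }
    lra.
Qed.

Fixpoint vline (x y d : Z) (n : nat) : list point :=
  match n with
  | O => [(x, y)]
  | S n => (x, y) :: vline x (y + d) d n
  end.

Lemma vline_props w x d (Hd : Z.abs d = 1%Z) n : forall y,
  consecutive adjacent (vline x y d n) /\
  last (vline x y d n) (x, y) = (x, (y + d * Z.of_nat n)%Z) /\
  passage_time w (vline x y d n) = IZR (Z.of_nat n) /\
  hc (vline x y d n) = 0%nat.
Proof.
  induction n as [|n IH]; intros y.
  - simpl. repeat split; try reflexivity. f_equal. lia.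
  - destruct (IH (y + d)%Z) as (H1 & H2 & H3 & H4).
    simpl vline. destruct n as [|n].
    + simpl. repeat split.
      * unfold adjacent; simpl. lia.
      * f_equal. lia.
      * unfold edge_weight; simpl. destruct Z.eq_dec; [|lia]. lra.
      * destruct Z.eq_dec; [|lia]. reflexivity.
    + change (vline x (y + d) d (S n)) with ((x, (y+d)%Z) :: vline x (y + d + d) d n) in *.
      repeat split.
      * unfold adjacent; simpl. lia.
      * exact H1.
      * change (last ((x, y) :: (x, (y + d)%Z) :: vline x (y + d + d) d n) (x, y))
          with (last ((x, (y + d)%Z) :: vline x (y + d + d) d n) (x, y)).
        transitivity (x, (y + d + d * Z.of_nat (S n))%Z); [|f_equal; lia]. rewrite <- H2. apply last_default.
      * change (passage_time w ((x, y) :: (x, (y + d)%Z) :: vline x (y + d + d) d n))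
          with (edge_weight w (x, y) (x, (y + d)%Z) + passage_time w ((x, (y + d)%Z) :: vline x (y + d + d) d n)).
        rewrite H3. unfold edge_weight; simpl. destruct Z.eq_dec; [|lia].
        rewrite Pos2Z.inj_succ, succ_IZR. ring.
      * change (hc ((x, y) :: (x, (y + d)%Z) :: vline x (y + d + d) d n))
          with (((if Z.eq_dec x x then 0 else 1) + hc ((x, (y + d)%Z) :: vline x (y + d + d) d n))%nat).
        rewrite H4. destruct Z.eq_dec; [|lia]. reflexivity.
Qed.

Definition good (p : list point) := is_path p.

Lemma reduce w (Hw : forall z, 0 <= w z) (L : list point) (z1 : point) (M : list point) (z2 : point) (R : list point) :
  fst z1 = fst z2 ->
  consecutive adjacent (L ++ z1 :: (M ++ z2 :: R)) ->
  (1 <= hc (z1 :: M ++ [z2]))%nat ->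
  exists q, is_path q /\ hd_error q = hd_error (L ++ z1 :: (M ++ z2 :: R)) /\
    (forall d, last q d = last (L ++ z1 :: (M ++ z2 :: R)) d) /\
    (hc q < hc (L ++ z1 :: (M ++ z2 :: R)))%nat /\
    passage_time w q <= passage_time w (L ++ z1 :: (M ++ z2 :: R)).
Proof.
  intros Hcol Hp Hhc.
  pose proof Hp as Hp'. apply consec_3 in Hp' as (HL & HS & HR).
  pose proof (LB w Hw (M ++ [z2]) z1 HS) as HLB.
  change (z1 :: M ++ [z2]) with ((z1 :: M) ++ [z2]) in HLB.
  rewrite last_last, <- app_comm_cons in HLB.
  assert (Hlast : forall d, last (L ++ z1 :: (M ++ z2 :: R)) d = last (z2 :: R) d).
  { intros d. rewrite last_split. change (z1 :: M ++ z2 :: R) with ((z1 :: M) ++ z2 :: R).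
    apply last_split. }
  destruct (Z.eq_dec (snd z1) (snd z2)) as [Heq|Hne].
  - assert (z2 = z1) by (destruct z1, z2; simpl in *; subst; reflexivity). subst z2.
    exists (L ++ z1 :: R). split; [|split; [|split; [|split]]].
    + split; [destruct L; discriminate|].
      apply consec_split. split; auto.
    + apply hd_split.
    + intros d. rewrite Hlast. apply last_split.
    + rewrite hc_3, hc_split. lia.
    + rewrite pt_3, pt_split.
      pose proof (pt_nonneg w Hw (z1 :: M ++ [z1])). lra.
  - destruct z1 as [c a0], z2 as [c' b0]. cbn [fst snd] in Hcol, Hne, HLB. subst c'.
    set (d := if Z_lt_dec a0 b0 then 1%Z else (-1)%Z).
    assert (Hd : Z.abs d = 1%Z) by (unfold d; destruct Z_lt_dec; lia).
    set (n := Z.abs_nat (b0 - a0)).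
    assert (Hn : (a0 + d * Z.of_nat n = b0)%Z).
    { unfold n, d. rewrite Nat2Z.inj_abs_nat. destruct Z_lt_dec; lia. }
    destruct n as [|n'] eqn:En.
    { exfalso. simpl in Hn. lia. }
    destruct (vline_props w c d Hd (S n') a0) as (V1 & V2 & V3 & V4).
    set (V := vline c (a0 + d) d n').
    assert (HV : vline c a0 d (S n') = (c, a0) :: V) by reflexivity.
    assert (HVl : last V (c, a0) = (c, b0)).
    { rewrite HV in V2. unfold V. destruct n'; simpl in V2 |- *; rewrite V2; f_equal; exact Hn. }
    assert (HVne : V <> []) by (unfold V; destruct n'; discriminate).
    pose proof (@app_removelast_last _ V (c, a0) HVne) as HVd. rewrite HVl in HVd.
    set (M' := removelast V) in *.
    assert (HS' : vline c a0 d (S n') = ((c, a0) : point) :: M' ++ [((c, b0) : point)]) by (rewrite HV, HVd at 1; reflexivity).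
    rewrite HS' in V1, V3, V4.
    exists (L ++ ((c, a0) : point) :: (M' ++ ((c, b0) : point) :: R)). split; [|split; [|split; [|split]]].
    + split; [destruct L; discriminate|].
      apply consec_3. auto.
    + apply hd_split.
    + intros d0. rewrite Hlast, last_split.
      change ((c, a0) :: M' ++ (c, b0) :: R) with (((c, a0) :: M') ++ (c, b0) :: R).
      rewrite last_split. reflexivity.
    + rewrite !hc_3. lia.
    + rewrite !pt_3. rewrite V3.
      assert (Ee : Z.of_nat (S n') = Z.abs (a0 - b0)).
      { rewrite <- En. unfold n. rewrite Nat2Z.inj_abs_nat. lia. }
      rewrite Ee. lra.
Qed.

Lemma crossing (x : Z) : forall l (h : point), consecutive adjacent (h :: l) ->
  (fst h <= x)%Z -> (x + 1 <= fst (last (h :: l) h))%Z ->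
  exists A a B, h :: l = A ++ ((x, a) : point) :: (((x + 1)%Z, a) : point) :: B.
Proof.
  induction l as [|h' l IH]; intros h Hc H1 H2.
  - simpl in H2. lia.
  - destruct Hc as [Hadj Hc].
    destruct (Z_le_dec (fst h') x) as [Hle|Hgt].
    + destruct (IH h' Hc Hle) as (A & a & B & E).
      { change (last (h :: h' :: l) h) with (last (h' :: l) h) in H2.
        rewrite (last_default h' l h h') in H2. exact H2. }
      exists (h :: A), a, B. rewrite E. reflexivity.
    + unfold adjacent in Hadj.
      exists [], (snd h), l. destruct h as [h1 h2], h' as [h1' h2']. simpl in *.
      assert (h1 = x) by lia. assert (h1' = x + 1)%Z by lia. assert (h2' = h2) by lia.
      subst. reflexivity.
Qed.

Lemma left_or_sd : forall p, consecutive adjacent p ->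
  semi_directed p \/ exists A x b C, p = A ++ (((x + 1)%Z, b) : point) :: ((x, b) : point) :: C.
Proof.
  induction p as [|z l IH]; intros Hc.
  - left. exact I.
  - destruct l as [|z' l'].
    + left. exact I.
    + destruct Hc as [Hadj Hc].
      assert (Hs : sd_step z z' \/ exists x b, z = (((x + 1)%Z, b) : point) /\ z' = ((x, b) : point)).
      { unfold adjacent in Hadj. unfold sd_step. destruct z as [a b], z' as [c d]. simpl in *.
        destruct (Z.eq_dec c (a + 1)); [left; left; lia|].
        destruct (Z.eq_dec c (a - 1)).
        - right. exists c, b. split; f_equal; lia.
        - left; right. lia. }
      destruct Hs as [Hs | (x & b & E1 & E2)].
      * destruct (IH Hc) as [Hsd | (A & x & b & C & E)].
        -- left. split; assumption.
        -- right. exists (z :: A), x, b, C. rewrite E. reflexivity.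
      * right. exists [], x, b, l'. subst. reflexivity.
Qed.

Lemma step1 w (Hw : forall z, 0 <= w z) (u v : point) : forall n p, (hc p < n)%nat ->
  is_path p -> hd_error p = Some u -> last p u = v -> (fst u <= fst v)%Z ->
  exists q, path_from_to q u v /\ semi_directed q /\ passage_time w q <= passage_time w p.
Proof.
  induction n as [|n IHn]; intros p Hn Hp Hh Hl Huv; [lia|].
  destruct Hp as [Hne Hc].
  destruct (left_or_sd p Hc) as [Hsd | (A & x & b & C & E)].
  { exists p. split; [split; [split|split]|split]; auto; lra. }
  assert (Hred : exists L z1 M z2 R, p = L ++ z1 :: (M ++ z2 :: R) /\ fst z1 = fst z2 /\
            (1 <= hc (z1 :: M ++ [z2]))%nat).
  { pose proof Hc as Hc'. rewrite E in Hc'. apply consec_split in Hc' as [HcA HcC].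
    destruct (Z_le_dec (fst u) x) as [Hux|Hux].
    - destruct A as [|h A0].
      { rewrite E in Hh. simpl in Hh. injection Hh as <-. simpl in Hux. lia. }
      rewrite E in Hh. simpl in Hh. injection Hh as ->.
      destruct (crossing x (A0 ++ [(((x + 1)%Z, b) : point)]) u) as (A' & a & B' & E').
      + exact HcA.
      + exact Hux.
      + change (u :: A0 ++ [(((x + 1)%Z, b) : point)]) with ((u :: A0) ++ [(((x + 1)%Z, b) : point)]).
        rewrite last_last. simpl. lia.
      + exists A', ((x, a) : point), ((((x + 1)%Z, a) : point) :: B'), ((x, b) : point), C.
        split; [|split].
        * rewrite E. replace ((u :: A0) ++ (((x + 1)%Z, b) : point) :: ((x, b) : point) :: C)
            with ((u :: A0 ++ [(((x + 1)%Z, b) : point)]) ++ ((x, b) : point) :: C)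
            by (simpl; rewrite <- app_assoc; reflexivity).
          rewrite E'. rewrite <- app_assoc. reflexivity.
        * reflexivity.
        * cbn [app]. rewrite hc_cons2. simpl fst. destruct Z.eq_dec; lia.
    - destruct HcC as [_ HcC].
      destruct (crossing x C ((x, b) : point)) as (A' & a & B' & E').
      + exact HcC.
      + simpl. lia.
      + rewrite E in Hl. rewrite last_split in Hl.
        change (last ((((x + 1)%Z, b) : point) :: ((x, b) : point) :: C) u)
          with (last (((x, b) : point) :: C) u) in Hl.
        rewrite (last_default _ _ _ ((x, b) : point)) in Hl. rewrite Hl.
        rewrite E in Hh. assert (fst u = x + 1 \/ x + 1 <= fst u)%Z as _ by lia. lia.
      + exists A, (((x + 1)%Z, b) : point), (A' ++ [((x, a) : point)]), (((x + 1)%Z, a) : point), B'.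
        split; [|split].
        * rewrite E, E'. rewrite <- app_assoc. reflexivity.
        * reflexivity.
        * destruct A' as [|h A''].
          -- simpl. destruct Z.eq_dec; simpl in *; lia.
          -- injection E' as Eh _. subst h. cbn [app]. rewrite hc_cons2. simpl fst.
             destruct Z.eq_dec; lia. }
  destruct Hred as (L & z1 & M & z2 & R & Ep & Hcol & Hhc).
  rewrite Ep in Hc.
  destruct (reduce w Hw L z1 M z2 R Hcol Hc Hhc) as (q & Hq & Hqh & Hql & Hqc & Hqt).
  rewrite <- Ep in Hqh, Hql, Hqc, Hqt.
  destruct (IHn q) as (q' & H1 & H2 & H3).
  - lia.
  - exact Hq.
  - rewrite Hqh. exact Hh.
  - rewrite Hql. exact Hl.
  - exact Huv.
  - exists q'. split; [|split]; auto. lra.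
Qed.

Definition point_eq_dec : forall x y : point, {x = y} + {x <> y}.
Proof. decide equality; apply Z.eq_dec. Defined.

Lemma step2 w (Hw : forall z, 0 <= w z) : forall n p, (length p < n)%nat ->
  is_path p -> semi_directed p ->
  exists q, is_path q /\ semi_directed q /\ NoDup q /\ hd_error q = hd_error p /\
    (forall d, last q d = last p d) /\ passage_time w q <= passage_time w p.
Proof.
  induction n as [|n IHn]; intros p Hn Hp Hsd; [lia|].
  destruct (NoDup_dec point_eq_dec p) as [Hnd|Hnd].
  { exists p. repeat split; auto; try apply Hp. lra. }
  assert (Hdec : decidable_eq point).
  { intros x y. destruct (point_eq_dec x y); [left|right]; auto. }
  destruct (not_NoDup Hdec Hnd) as (a & l1 & l2 & l3 & E).
  destruct Hp as [Hne Hc].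
  rewrite E in Hc, Hsd.
  apply consec_3 in Hc as (HL & HS & HR).
  apply consec_3 in Hsd as (HL' & HS' & HR').
  destruct (IHn (l1 ++ a :: l3)) as (q & H1 & H2 & H3 & H4 & H5 & H6).
  - rewrite E in Hn. rewrite !length_app in Hn |- *. simpl in *. rewrite length_app in Hn. simpl in Hn. lia.
  - split; [destruct l1; discriminate|]. apply consec_split; auto.
  - apply consec_split; auto.
  - exists q. rewrite E. split; [exact H1|split; [exact H2|split; [exact H3|split; [|split]]]].
    + rewrite H4. apply hd_split.
    + intros d. rewrite H5. rewrite !last_split.
      change (a :: l2 ++ a :: l3) with ((a :: l2) ++ a :: l3). rewrite last_split. reflexivity.
    + pose proof (pt_3 w l1 a l2 a l3). pose proof (pt_split w l1 a l3).
      pose proof (pt_nonneg w Hw (a :: l2 ++ [a])). lra.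
Qed.

Theorem proposition2p1 (w : hweights) (Hw : forall z, 0 <= w z)
  (x1 y1 x2 y2 : Z) (gamma : list point) :
  geodesic w gamma (x1, y1) (x2, y2) ->
  (x1 <= x2)%Z ->
  exists gamma' : list point,
    geodesic w gamma' (x1, y1) (x2, y2) /\
    semi_directed gamma' /\ non_self_intersecting gamma'.
Proof.
  intros [[Hp [Hh Hl]] Hmin] Hx.
  destruct (step1 w Hw (x1, y1) (x2, y2) (S (hc gamma)) gamma ltac:(lia) Hp Hh Hl Hx)
    as (q & [Hq [Hqh Hql]] & Hqsd & Hqt).
  destruct (step2 w Hw (S (length q)) q ltac:(lia) Hq Hqsd)
    as (q' & H1 & H2 & H3 & H4 & H5 & H6).
  exists q'. split; [|split; auto].
  split.
  - split; [exact H1|split].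
    + rewrite H4. exact Hqh.
    + rewrite H5. exact Hql.
  - intros r Hr. specialize (Hmin r Hr). lra.
Qed.
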